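(* Fix a sample $(x,u)$, generative parameters $\theta$, inference parameters $\phi$ and $\epsilon>0$. Suppose there is a function $g:\mathbb{R}^{d_Z}\to\mathbb{R}$ with $\mathrm{SNR}(g)\ge 1/\epsilon$. Then for every $\alpha\in[0,1]$, $$\mathrm{ELBO}_{\theta,\phi}(\alpha;x,u)-\mathrm{ELBO}_{\theta,\phi}(0;x,u)\ \ge\ \mathrm{LB}(\alpha,\epsilon,\Delta_{1-0}(x,u)),$$ where $\mathrm{LB}(\alpha,\epsilon,\Delta):=\alpha\Delta+\alpha\int_{\alpha}^{1}\frac{1-t}{t(1-t)+\epsilon}\,dt+(1-\alpha)\int_{0}^{\alpha}\frac{t}{t(1-t)+\epsilon}\,dt$.
   Context: Observations $x\in\mathbb{R}^{d_X}$, covariates $u\in\mathbb{R}^{d_U}$, latents $z\in\mathbb{R}^{d_Z}$, $d_Z<d_X$. Generative parameters $\theta=(f,T,\lambda)$: mixing function $f$, label prior density $p_{T,\lambda}(z|u)=\prod_{i=1}^{d_Z}\exp(\lambda_i(u)\cdot T_i(z_i)-A(u)+B(z_i))$, decoder density $p_f(x|z)=p_\epsilon(x-f(z))$ for a fixed noise density $p_\epsilon$. Inference parameters $\phi$ determine an encoder density $q_\phi(z|x)$ and posterior density $q_\phi(z|x,u)$. For $\alpha\in[0,1]$, with $m_\alpha=\alpha q_\phi(\cdot|x)+(1-\alpha)q_\phi(\cdot|x,u)$, $\mathrm{ELBO}_{\theta,\phi}(\alpha;x,u)=\mathbb{E}_{z\sim m_\alpha}\log p_f(x|z)-\mathcal{D}_{\mathrm{KL}}(m_\alpha\|p_{T,\lambda}(\cdot|u))$,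 and $\Delta_{1-0}(x,u):=\mathrm{ELBO}_{\theta,\phi}(1;x,u)-\mathrm{ELBO}_{\theta,\phi}(0;x,u)$. The signal-to-noise ratio of $g$ is $$\mathrm{SNR}(g)=\frac{\big(\mathbb{E}_{q_\phi(z|x)}g(z)-\mathbb{E}_{q_\phi(z|x,u)}g(z)\big)^2}{\max\big(\mathrm{Var}_{q_\phi(z|x)}g(z),\ \mathrm{Var}_{q_\phi(z|x,u)}g(z)\big)}.$$ All expectations, variances and divergences appearing are assumed finite. *)

(* Defs.v *)
From HB Require Import structures.
From mathcomp Require Import all_boot all_order all_algebra.
From mathcomp Require Import all_classical all_reals all_analysis.
Set Implicit Arguments. Unset Strict Implicit. Unset Printing Implicit Defensive.
Import Order.TTheory GRing.Theory Num.Theory.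
Import numFieldNormedType.Exports.
Local Open Scope classical_set_scope.
Local Open Scope ring_scope.

(* Points of R^n are represented as n-tuples of reals, which carry the
   product (= Borel) sigma-algebra [measure_tuple_display]. *)

Section Defs.
Variable R : realType.

(* Lebesgue measure on R^n, characterised by its values on boxes
   (a_1,b_1] x ... x (a_n,b_n]; this determines it uniquely on the
   product sigma-algebra. *)
Definition is_lebesgue_measure (n : nat)
  (mu : {measure set (n.-tuple R) -> \bar R}) : Prop :=
  forall a b : 'I_n -> R, (forall i, a i <= b i) ->
    mu [set t | forall i, a i < tnth t i <= b i] = (\prod_(i < n) (b i - a i))%:E.

Definition is_density (n : nat) (mu : {measure set (n.-tuple R) -> \bar R})
  (p : n.-tuple R -> R) : Prop :=
  [/\ measurable_fun setT p, (forall t, 0 <= p t) &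
      (\int[mu]_(t in setT) (p t)%:E = 1)%E].

Definition tsub (n : nat) (x y : n.-tuple R) : n.-tuple R :=
  [tuple tnth x i - tnth y i | i < n].

Definition prior (dZ dU k : nat) (T : 'I_dZ -> R -> 'rV[R]_k)
  (lam : 'I_dZ -> dU.-tuple R -> 'rV[R]_k) (A : dU.-tuple R -> R) (B : R -> R)
  (u : dU.-tuple R) (z : dZ.-tuple R) : R :=
  \prod_(i < dZ) expR ((\sum_(j < k) lam i u 0 j * T i (tnth z i) 0 j)
                        - A u + B (tnth z i)).

Definition decoder (dX dZ : nat) (peps : dX.-tuple R -> R)
  (f : dZ.-tuple R -> dX.-tuple R) (x : dX.-tuple R) (z : dZ.-tuple R) : R :=
  peps (tsub x (f z)).

Definition mixture (n : nat) (alpha : R) (q1 q0 : n.-tuple R -> R)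
  (z : n.-tuple R) : R := alpha * q1 z + (1 - alpha) * q0 z.

Definition expect (n : nat) (mu : {measure set (n.-tuple R) -> \bar R})
  (q : n.-tuple R -> R) (h : n.-tuple R -> R) : R :=
  Rintegral mu setT (fun z => q z * h z).

Definition variance (n : nat) (mu : {measure set (n.-tuple R) -> \bar R})
  (q : n.-tuple R -> R) (h : n.-tuple R -> R) : R :=
  expect mu q (fun z => (h z - expect mu q h) ^+ 2).

(* KL(m || p) = int m log (m/p)  (with 0 log 0 = 0) *)
Definition KL (n : nat) (mu : {measure set (n.-tuple R) -> \bar R})
  (m p : n.-tuple R -> R) : R :=
  Rintegral mu setT (fun z => m z * ln (m z / p z)).

(* ELBO(alpha; x, u) = E_{m_alpha} log p_f(x|z) - KL(m_alpha || p(.|u)),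
   with q1 = q_phi(.|x), q0 = q_phi(.|x,u), pz = p_{T,lambda}(.|u),
   pxz = p_f(x|.). *)
Definition ELBO (n : nat) (mu : {measure set (n.-tuple R) -> \bar R})
  (pxz pz q1 q0 : n.-tuple R -> R) (alpha : R) : R :=
  expect mu (mixture alpha q1 q0) (fun z => ln (pxz z))
  - KL mu (mixture alpha q1 q0) pz.

(* signal-to-noise ratio, valued in extended reals: a ratio c/0 with c > 0
   is +oo; the undefined 0/0 is set to 0. *)
Definition SNR (n : nat) (mu : {measure set (n.-tuple R) -> \bar R})
  (q1 q0 : n.-tuple R -> R) (g : n.-tuple R -> R) : \bar R :=
  let num := (expect mu q1 g - expect mu q0 g) ^+ 2 in
  let den := Num.max (variance mu q1 g) (variance mu q0 g) in
  if den == 0 then (if num == 0 then 0%E else +oo%E) else (num / den)%:E.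

Definition LB (alpha eps Delta : R) : R :=
  alpha * Delta
  + alpha * Rintegral lebesgue_measure `[alpha, 1]
              (fun t => (1 - t) / (t * (1 - t) + eps))
  + (1 - alpha) * Rintegral lebesgue_measure `[0, alpha]
              (fun t => t / (t * (1 - t) + eps)).

End Defs.

(* Main.v *)
Require Import Defs.
From HB Require Import structures.
From mathcomp Require Import all_boot all_order all_algebra.
From mathcomp Require Import all_classical all_reals all_analysis.
Import Order.TTheory GRing.Theory Num.Theory.
Import numFieldNormedType.Exports.
Local Open Scope classical_set_scope.
Local Open Scope ring_scope.
From mathcomp Require Import ring lra measurable_realfun.


Set Implicit Arguments. Unset Strict Implicit. Unset Printing Implicit Defensive.
Import Order.TTheory GRing.Theory Num.Theory.
Import numFieldNormedType.Exports.
Local Open Scope classical_set_scope.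
Local Open Scope ring_scope.

Section S.
Variable R : realType.
Definition mm (p q t : R) := t * p + (1 - t) * q.
Notation leb := (@lebesgue_measure R).

Lemma forP (F : R -> R) t : continuous_at t F -> {for t, continuous F}.
Proof. by []. Qed.
Lemma forP' (F : R -> R) t : {for t, continuous F} -> continuous_at t F.
Proof. by []. Qed.

Ltac cont := repeat (try apply: forP; lazymatch goal with
 | |- continuous_at _ (fun x => @?A x + @?B x) =>
     apply: (continuousD (f:=A) (g:=B))
 | |- continuous_at _ (fun x => @?A x - @?B x) =>
     apply: (continuousB (f:=A) (g:=B))
 | |- continuous_at _ (fun x => @?A x * @?B x) =>
     apply: (continuousM (s:=A) (t:=B))
 | |- continuous_at _ (fun x => - @?A x) =>
     apply: (continuousN (f:=A))
 | |- continuous_at _ (fun x => x) => exact: cvg_id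
 | |- continuous_at _ ?F => first [apply: forP'; exact: cst_continuous | apply: forP'; assumption]
 end).

Lemma FTC_R (h B : R -> R) (a b : R) : a < b ->
  {within `[a, b], continuous h} ->
  (forall t, a < t < b -> is_derive t 1 B (h t)) ->
  {for a, continuous B} -> {for b, continuous B} ->
  Rintegral leb `[a, b] h = B b - B a.
Proof.
move=> ab ch dB ca cb.
rewrite /Rintegral (continuous_FTC2 ab ch (F := B)) //=.
- split.
  + move=> t; rewrite in_itv /= => /dB H; exact: ex_derive.
  + exact: cvg_at_right_filter.
  + exact: cvg_at_left_filter.
- move=> t; rewrite in_itv /= => /dB H.
  by rewrite derive1E derive_val.
Qed.

Lemma der_cont (f : R -> R) (t df : R) : is_derive t 1 f df -> {for t, continuous f}.
Proof.
move=> H; apply/differentiable_continuous; rewrite -derivable1_diffP.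
exact: ex_derive.
Qed.

Lemma der_mm (p q t : R) : is_derive t 1 (mm p q) (p - q).
Proof.
rewrite /mm.
eapply is_derive_eq.
  eapply is_deriveD.
    eapply is_deriveM; [exact: is_derive_id| exact: is_derive_cst].
  eapply is_deriveM; [|exact: is_derive_cst].
  eapply is_deriveB; [exact: is_derive_cst| exact: is_derive_id].
rewrite /= /GRing.scale /=. ring.
Qed.

Lemma der_aff (a b t : R) : is_derive t 1 (fun s : R => s * a + b) a.
Proof.
eapply is_derive_eq.
  eapply is_deriveD.
    eapply is_deriveM; [exact: is_derive_id| exact: is_derive_cst].
  exact: is_derive_cst.
rewrite /= /GRing.scale /=. ring.
Qed.

Lemma der_B1 (p q t : R) : 0 < mm p q t ->
  is_derive t 1 (fun s => (p - q) * s - q * ln (mm p q s)) ((p - q) - (p - q) * q / mm p q t).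
Proof.
move=> m0.
eapply is_derive_eq.
  eapply is_deriveB.
    eapply is_deriveM; [exact: is_derive_cst| exact: is_derive_id].
  eapply is_deriveM; [exact: is_derive_cst|].
  have H := (@is_derive1_comp R (@ln R) (mm p q) t _ _ (is_derive1_ln m0) (der_mm p q t)). exact H.
rewrite /= /GRing.scale /=. field. by rewrite gt_eqF.
Qed.

Lemma der_B2 (p q t : R) : 0 < mm p q t ->
  is_derive t 1 (fun s => p * ln (mm p q s) - (p - q) * s) ((p - q) * p / mm p q t - (p - q)).
Proof.
move=> m0.
eapply is_derive_eq.
  eapply is_deriveB.
    eapply is_deriveM; [exact: is_derive_cst|].
    have H := (@is_derive1_comp R (@ln R) (mm p q) t _ _ (is_derive1_ln m0) (der_mm p q t)). exact H.
  eapply is_deriveM; [exact: is_derive_cst| exact: is_derive_id].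
rewrite /= /GRing.scale /=. field. by rewrite gt_eqF.
Qed.

Definition kk (lam c : R -> R) (p q y t : R) :=
  2 * lam t * (p - q) * (y - c t) - lam t * lam t * mm p q t * ((y - c t) * (y - c t)).

Lemma kk_mm lam c p q y t : kk lam c p q y t * mm p q t <= (p - q) * (p - q).
Proof.
rewrite -subr_ge0.
have -> : (p - q) * (p - q) - kk lam c p q y t * mm p q t =
  (p - q - lam t * mm p q t * (y - c t)) ^+ 2 by rewrite /kk; ring.
exact: sqr_ge0.
Qed.

Lemma kk00 lam c y t : kk lam c 0 0 y t = 0.
Proof. by rewrite /kk /mm; ring. Qed.

Lemma mm_ge0 p q t : 0 <= p -> 0 <= q -> 0 <= t <= 1 -> 0 <= mm p q t.
Proof.
move=> p0 q0 /andP[t0 t1]; rewrite /mm addr_ge0 // mulr_ge0 // subr_ge0 //.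
Qed.

Lemma mm_eq0 p q t : 0 <= p -> 0 <= q -> 0 <= t <= 1 -> mm p q t = 0 ->
  t * p = 0 /\ (1 - t) * q = 0.
Proof.
move=> p0 q0 /andP[t0 t1] /eqP; rewrite /mm paddr_eq0 ?mulr_ge0 ?subr_ge0 //.
by case/andP => /eqP -> /eqP ->.
Qed.

Lemma pw1 lam c p q y t : 0 <= p -> 0 <= q -> 0 <= t -> t < 1 ->
  t * kk lam c p q y t <= (p - q) - (p - q) * q / mm p q t.
Proof.
move=> p0 q0 t0 t1.
have tI : 0 <= t <= 1 by rewrite t0 ltW.
have := mm_ge0 p0 q0 tI; rewrite le_eqVlt => /predU1P[m0|m0].
- have [tp qq] := mm_eq0 p0 q0 tI (esym m0).
  have q00 : q = 0.
    by move/eqP: qq; rewrite mulf_eq0 subr_eq0 (gt_eqF t1) /= => /eqP.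
  subst q; rewrite -m0 mulr0 mul0r !subr0.
  move/eqP: tp; rewrite mulf_eq0 => /orP[/eqP->|/eqP pz]; first by rewrite mul0r.
  by subst p; rewrite kk00 mulr0.
- have H : kk lam c p q y t <= (p - q) * (p - q) / mm p q t.
    by rewrite ler_pdivlMr // kk_mm.
  apply: (le_trans (ler_wpM2l t0 H)).
  rewrite le_eqVlt; apply/orP; left; apply/eqP.
  move: m0; rewrite /mm => m0. field. by rewrite gt_eqF.
Qed.

Lemma pw2 lam c p q y t : 0 <= p -> 0 <= q -> 0 < t -> t <= 1 ->
  (1 - t) * kk lam c p q y t <= (p - q) * p / mm p q t - (p - q).
Proof.
move=> p0 q0 t0 t1.
have tI : 0 <= t <= 1 by rewrite t1 ltW.
have := mm_ge0 p0 q0 tI; rewrite le_eqVlt => /predU1P[m0|m0].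
- have [tp qq] := mm_eq0 p0 q0 tI (esym m0).
  have p00 : p = 0.
    by move/eqP: tp; rewrite mulf_eq0 (gt_eqF t0) /= => /eqP.
  subst p; rewrite -m0 mulr0 mul0r (_ : 0 - (0 - q) = q); last by ring.
  move/eqP: qq; rewrite mulf_eq0 => /orP[/eqP->|/eqP pz]; first by rewrite mul0r.
  by subst q; rewrite kk00 mulr0.
- have H : kk lam c p q y t <= (p - q) * (p - q) / mm p q t.
    by rewrite ler_pdivlMr // kk_mm.
  have t1' : 0 <= 1 - t by rewrite subr_ge0.
  apply: (le_trans (ler_wpM2l t1' H)).
  rewrite le_eqVlt; apply/orP; left; apply/eqP.
  move: m0; rewrite /mm => m0. field. by rewrite gt_eqF.
Qed.

Definition contH (lam c : R -> R) :=
  forall t, 0 <= t <= 1 -> {for t, continuous lam} /\ {for t, continuous c}.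

Lemma int_cc (f : R -> R) a b : (forall t, a <= t <= b -> {for t, continuous f}) ->
  leb.-integrable `[a, b] (EFin \o f).
Proof.
move=> H; apply: continuous_compact_integrable; first exact: segment_compact.
apply: continuous_in_subspaceT => t; rewrite inE /= in_itv /= => /H; exact.
Qed.

Lemma eqle (x y : R) : x = y -> x <= y.
Proof. by move=> ->. Qed.

Lemma piece1 lam c p q y a : 0 < a < 1 -> 0 <= p -> 0 <= q -> contH lam c ->
  Rintegral leb `[0, a] (fun t => t * kk lam c p q y t)
  <= (p - q) * a - q * ln (mm p q a) + q * ln q.
Proof.
move=> /andP[a0 a1] p0 q0 hc.
have ik : leb.-integrable `[0, a] (EFin \o (fun t => t * kk lam c p q y t)).
  apply: int_cc => t /andP[t0 ta].
  have [hl hc'] := hc t ltac:(rewrite t0 /=; apply: ltW; exact: le_lt_trans ta a1).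
  rewrite /kk /mm; cont.
set h1 := fun t => (p - q) - (p - q) * q / mm p q t.
have le1 : leb.-integrable `[0, a] (EFin \o h1) ->
    Rintegral leb `[0, a] (fun t => t * kk lam c p q y t) <= Rintegral leb `[0, a] h1.
  move=> ih; apply: le_Rintegral => //.
  move=> t; rewrite /= in_itv /= => /andP[t0 ta].
  apply: pw1 => //; exact: le_lt_trans ta a1.
have [q00|qpos] : q = 0 \/ 0 < q by move: q0; rewrite le_eqVlt => /predU1P[->|]; auto.
- subst q.
  have eh : h1 = (fun _ => p).
    by apply/funext => t; rewrite /h1 mulr0 mul0r !subr0.
  rewrite eh in le1.
  have ih : leb.-integrable `[0, a] (EFin \o (fun _ : R => p)).
    apply: int_cc => t _; exact: cst_continuous.
  apply: (le_trans (le1 ih)).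
  have E : Rintegral leb `[0, a] (fun _ => p) = (a * p + 0) - (0 * p + 0).
    apply: (@FTC_R (fun _ => p) (fun s => s * p + 0) 0 a a0).
    + apply: continuous_in_subspaceT => t _; exact: cst_continuous.
    + move=> t _; exact: der_aff.
    + exact: der_cont (der_aff _ _ _).
    + exact: der_cont (der_aff _ _ _).
  rewrite E; apply: eqle; ring.
- have mpos : forall t, 0 <= t <= a -> 0 < mm p q t.
    move=> t /andP[t0 ta]; rewrite /mm.
    have : 0 < 1 - t by rewrite subr_gt0; exact: le_lt_trans ta a1.
    move=> h; nra.
  have ch : forall t, 0 <= t <= a -> {for t, continuous h1}.
    move=> t /mpos mt; rewrite /h1; cont.
    apply: continuousV; first by rewrite gt_eqF.
    exact: der_cont (der_mm _ _ _).
  have ih : leb.-integrable `[0, a] (EFin \o h1) by apply: int_cc.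
  apply: (le_trans (le1 ih)).
  have E : Rintegral leb `[0, a] h1 = ((p - q) * a - q * ln (mm p q a)) - ((p - q) * 0 - q * ln (mm p q 0)).
    apply: (@FTC_R h1 (fun s => (p - q) * s - q * ln (mm p q s)) 0 a a0).
    + apply: continuous_in_subspaceT => t; rewrite inE /= in_itv /=; exact: ch.
    + move=> t /andP[t0 ta]; apply: der_B1; apply: mpos; rewrite !ltW //.
    + apply: der_cont (der_B1 _); apply: mpos; rewrite lexx ltW //.
    + apply: der_cont (der_B1 _); apply: mpos; rewrite lexx ltW //.
  rewrite E.
  have -> : mm p q 0 = q by rewrite /mm; ring.
  apply: eqle; ring.
Qed.

Lemma piece2 lam c p q y a : 0 < a < 1 -> 0 <= p -> 0 <= q -> contH lam c ->
  Rintegral leb `[a, 1] (fun t => (1 - t) * kk lam c p q y t)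
  <= p * ln p - (p - q) - p * ln (mm p q a) + (p - q) * a.
Proof.
move=> /andP[a0 a1] p0 q0 hc.
have ik : leb.-integrable `[a, 1] (EFin \o (fun t => (1 - t) * kk lam c p q y t)).
  apply: int_cc => t /andP[t0 ta].
  have [hl hc'] := hc t ltac:(rewrite ta andbT; apply: ltW; exact: (lt_le_trans a0 t0)).
  rewrite /kk /mm; cont.
set h2 := fun t => (p - q) * p / mm p q t - (p - q).
have le1 : leb.-integrable `[a, 1] (EFin \o h2) ->
    Rintegral leb `[a, 1] (fun t => (1 - t) * kk lam c p q y t) <= Rintegral leb `[a, 1] h2.
  move=> ih; apply: le_Rintegral => //.
  move=> t; rewrite /= in_itv /= => /andP[t0 ta].
  apply: pw2 => //; exact: (lt_le_trans a0 t0).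
have [p00|ppos] : p = 0 \/ 0 < p by move: p0; rewrite le_eqVlt => /predU1P[->|]; auto.
- subst p.
  have eh : h2 = (fun _ => q).
    by apply/funext => t; rewrite /h2 mulr0 mul0r; ring.
  rewrite eh in le1.
  have ih : leb.-integrable `[a, 1] (EFin \o (fun _ : R => q)).
    apply: int_cc => t _; exact: cst_continuous.
  apply: (le_trans (le1 ih)).
  have E : Rintegral leb `[a, 1] (fun _ => q) = (1 * q + 0) - (a * q + 0).
    apply: (@FTC_R (fun _ => q) (fun s => s * q + 0) a 1 a1).
    + apply: continuous_in_subspaceT => t _; exact: cst_continuous.
    + move=> t _; exact: der_aff.
    + exact: der_cont (der_aff _ _ _).
    + exact: der_cont (der_aff _ _ _).
  rewrite E; apply: eqle; ring.
- have mpos : forall t, a <= t <= 1 -> 0 < mm p q t.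
    move=> t /andP[t0 ta]; rewrite /mm.
    have h : 0 < t by exact: (lt_le_trans a0 t0).
    have h' : 0 <= 1 - t by rewrite subr_ge0.
    rewrite -(addr0 0); apply: ltr_leD; [exact: mulr_gt0|exact: mulr_ge0].
  have ch : forall t, a <= t <= 1 -> {for t, continuous h2}.
    move=> t /mpos mt; rewrite /h2; cont.
    apply: continuousV; first by rewrite gt_eqF.
    exact: der_cont (der_mm _ _ _).
  have ih : leb.-integrable `[a, 1] (EFin \o h2) by apply: int_cc.
  apply: (le_trans (le1 ih)).
  have E : Rintegral leb `[a, 1] h2 = (p * ln (mm p q 1) - (p - q) * 1) - (p * ln (mm p q a) - (p - q) * a).
    apply: (@FTC_R h2 (fun s => p * ln (mm p q s) - (p - q) * s) a 1 a1).
    + apply: continuous_in_subspaceT => t; rewrite inE /= in_itv /=; exact: ch.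
    + move=> t /andP[t0 ta]; apply: der_B2; apply: mpos; rewrite !ltW //.
    + apply: der_cont (der_B2 _); apply: mpos; rewrite lexx ltW //.
    + apply: der_cont (der_B2 _); apply: mpos; rewrite lexx ltW //.
  rewrite E.
  have -> : mm p q 1 = p by rewrite /mm; ring.
  apply: eqle; ring.
Qed.

Lemma gap1D lam c p q y a : 0 < a < 1 -> 0 <= p -> 0 <= q -> contH lam c ->
  (1 - a) * Rintegral leb `[0, a] (fun t => t * kk lam c p q y t)
  + a * Rintegral leb `[a, 1] (fun t => (1 - t) * kk lam c p q y t)
  <= (1 - a) * (q * ln q) + a * (p * ln p) - mm p q a * ln (mm p q a).
Proof.
move=> ha p0 q0 hc.
have /andP[a0 a1] := ha.
apply: le_trans.
  apply: lerD.
    apply: ler_wpM2l; last exact: (piece1 y ha p0 q0 hc).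
    by rewrite subr_ge0 ltW.
  apply: ler_wpM2l; last exact: (piece2 y ha p0 q0 hc).
  exact: ltW.
apply: eqle; rewrite /mm; ring.
Qed.

Lemma Rint_lin d (T : measurableType d) (mu : {measure set T -> \bar R}) (D : set T)
  (n : nat) (c : nat -> R) (F : nat -> T -> R) : measurable D ->
  (forall i, (i < n)%N -> mu.-integrable D (EFin \o F i)) ->
  Rintegral mu D (fun x => \sum_(i < n) c i * F i x) = \sum_(i < n) c i * Rintegral mu D (F i)
  /\ mu.-integrable D (EFin \o (fun x => \sum_(i < n) c i * F i x)).
Proof.
move=> mD; elim: n => [|n IH] H.
  have -> : (fun x => \sum_(i < 0) c i * F i x) = (fun _ => 0).
    by apply/funext => x; rewrite big_ord0.
  rewrite big_ord0 Rintegral_cst // mul0r; split => //.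
  apply: (eq_integrable mD (cst 0%E)) => //; exact: integrable0.
have [IH1 IH2] := IH (fun i hi => H i (ltnW hi)).
have Hn := H n (ltnSn n).
have iZ : mu.-integrable D (EFin \o (fun x => c n * F n x)).
  apply: (eq_integrable mD (fun x => ((c n)%:E * (F n x)%:E)%E)).
    by move=> x _; rewrite /= EFinM.
  exact: integrableZl.
have -> : (fun x => \sum_(i < n.+1) c i * F i x) =
          (fun x => (\sum_(i < n) c i * F i x) + c n * F n x).
  by apply/funext => x; rewrite big_ord_recr.
rewrite big_ord_recr /= RintegralD // IH1 RintegralZl //; split => //.
apply: (eq_integrable mD ((EFin \o (fun x => \sum_(i < n) c i * F i x)) \+ (EFin \o (fun x => c n * F n x)))).
  by move=> x _.
exact: integrableD.
Qed.

Definition ecoef (lam c : R -> R) (i : nat) (t : R) : R :=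
 match i with
 | 0 => - (2 * lam t * c t) - lam t * lam t * t * (c t * c t)
 | 1 => 2 * lam t + 2 * lam t * lam t * t * c t
 | 2 => - (lam t * lam t * t)
 | 3 => 2 * lam t * c t - lam t * lam t * (1 - t) * (c t * c t)
 | 4 => - (2 * lam t) + 2 * lam t * lam t * (1 - t) * c t
 | 5 => - (lam t * lam t * (1 - t))
 | _ => 0 end.

Definition mon (i : nat) (p q y : R) : R :=
 match i with 0 => p | 1 => p * y | 2 => p * y ^+ 2 | 3 => q | 4 => q * y
 | 5 => q * y ^+ 2 | _ => 0 end.

Lemma kk_expand lam c p q y t :
  kk lam c p q y t = \sum_(i < 6) mon i p q y * ecoef lam c i t.
Proof. by rewrite !big_ord_recr big_ord0 /= /kk /mm; ring. Qed.

Lemma ecoef_cont lam c i t : {for t, continuous lam} -> {for t, continuous c} ->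
  {for t, continuous (ecoef lam c i)}.
Proof.
move=> hl hc.
case: i => [|[|[|[|[|[|i]]]]]]; rewrite /ecoef /=; cont.
Qed.

Definition Gint (a : R) (phi : R -> R) :=
  (1 - a) * Rintegral leb `[0, a] (fun t => t * phi t)
  + a * Rintegral leb `[a, 1] (fun t => (1 - t) * phi t).

Lemma Gint_lin a (n : nat) (c : nat -> R) (e : nat -> R -> R) : 0 <= a <= 1 ->
  (forall i t, (i < n)%N -> 0 <= t <= 1 -> {for t, continuous (e i)}) ->
  Gint a (fun t => \sum_(i < n) c i * e i t) = \sum_(i < n) c i * Gint a (e i).
Proof.
move=> /andP[a0 a1] He; rewrite /Gint.
have e1 : (fun t => t * \sum_(i < n) c i * e i t) = (fun t => \sum_(i < n) c i * (t * e i t)).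
  by apply/funext => t; rewrite mulr_sumr; apply: eq_bigr => i _; ring.
have e2 : (fun t => (1 - t) * \sum_(i < n) c i * e i t) = (fun t => \sum_(i < n) c i * ((1 - t) * e i t)).
  by apply/funext => t; rewrite mulr_sumr; apply: eq_bigr => i _; ring.
rewrite e1 e2.
rewrite (@Rint_lin _ _ leb `[0, a] n c (fun i t => t * e i t) _ _).1 //; last first.
  move=> i hi; apply: int_cc => t /andP[t0 ta].
  have := He i t hi ltac:(rewrite t0 /=; exact: le_trans ta a1) => h; cont.
rewrite (@Rint_lin _ _ leb `[a, 1] n c (fun i t => (1 - t) * e i t) _ _).1 //; last first.
  move=> i hi; apply: int_cc => t /andP[t0 ta].
  have := He i t hi ltac:(rewrite ta andbT; exact: le_trans t0) => h; cont.
rewrite !mulr_sumr -big_split /=; apply: eq_bigr => i _; ring.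
Qed.

Lemma Gint_le (a : R) (phi psi : R -> R) : 0 < a < 1 ->
  (forall t, 0 <= t <= 1 -> phi t <= psi t) ->
  (forall t, 0 <= t <= 1 -> {for t, continuous phi}) ->
  (forall t, 0 <= t <= 1 -> {for t, continuous psi}) ->
  Gint a phi <= Gint a psi.
Proof.
move=> /andP[a0 a1] Hle H1 H2; rewrite /Gint.
apply: lerD; apply: ler_wpM2l.
- by rewrite subr_ge0 ltW.
- apply: le_Rintegral => //.
  + apply: int_cc => t /andP[t0 ta].
    have h := H1 t ltac:(rewrite t0 /=; apply: ltW; exact: le_lt_trans ta a1); cont.
  + apply: int_cc => t /andP[t0 ta].
    have h := H2 t ltac:(rewrite t0 /=; apply: ltW; exact: le_lt_trans ta a1); cont.
  + move=> t; rewrite /= in_itv /= => /andP[t0 ta]; apply: ler_wpM2l => //.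
    apply: Hle; rewrite t0 /=; apply: ltW; exact: le_lt_trans ta a1.
- exact: ltW.
- apply: le_Rintegral => //.
  + apply: int_cc => t /andP[t0 ta].
    have h := H1 t ltac:(rewrite ta andbT; apply: ltW; exact: (lt_le_trans a0 t0)); cont.
  + apply: int_cc => t /andP[t0 ta].
    have h := H2 t ltac:(rewrite ta andbT; apply: ltW; exact: (lt_le_trans a0 t0)); cont.
  + move=> t; rewrite /= in_itv /= => /andP[t0 ta]; apply: ler_wpM2l; first by rewrite subr_ge0.
    apply: Hle; rewrite ta andbT; apply: ltW; exact: (lt_le_trans a0 t0).
Qed.


Lemma dens_int n (mu : {measure set (n.-tuple R) -> \bar R}) (p : n.-tuple R -> R) :
  is_density mu p -> mu.-integrable setT (EFin \o p) /\ Rintegral mu setT p = 1.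
Proof.
case => pm p0 pi; split; last by rewrite /Rintegral pi.
apply/integrableP; split; first exact/measurable_EFinP.
under eq_integral do rewrite gee0_abs ?lee_fin //.
by rewrite pi ltry.
Qed.

Lemma snr_facts n (mu : {measure set (n.-tuple R) -> \bar R}) (q1 q0 g : n.-tuple R -> R) (eps : R) :
  0 < eps -> ((1 / eps)%:E <= SNR mu q1 q0 g)%E ->
  (Defs.expect mu q1 g - Defs.expect mu q0 g != 0) /\
  Defs.variance mu q1 g <= eps * (Defs.expect mu q1 g - Defs.expect mu q0 g) ^+ 2 /\
  Defs.variance mu q0 g <= eps * (Defs.expect mu q1 g - Defs.expect mu q0 g) ^+ 2.
Proof.
move=> e0; rewrite /SNR.
set D := Defs.expect mu q1 g - Defs.expect mu q0 g.
set den := Num.max _ _.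
have hv1 : Defs.variance mu q1 g <= den by rewrite /den le_max lexx.
have hv0 : Defs.variance mu q0 g <= den by rewrite /den le_max lexx orbT.
have ie : 0 < 1 / eps by rewrite divr_gt0.
case: ifPn => [/eqP den0|den0].
  case: ifPn => [/eqP num0|num0].
    by rewrite lee_fin leNgt ie.
  move=> _; split.
    by apply: contraNN num0 => /eqP ->; rewrite expr0n.
  have : 0 <= eps * D ^+ 2 by rewrite mulr_ge0 ?sqr_ge0 // ltW.
  by rewrite den0 in hv1 hv0 => h0; split; apply: le_trans h0.
rewrite lee_fin => h.
have dpos : 0 < den.
  rewrite lt_neqAle eq_sym den0 /=; rewrite leNgt; apply/negP => dn.
  have : D ^+ 2 / den <= 0 by rewrite mulr_ge0_le0 ?sqr_ge0 // invr_le0 ltW.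
  by move=> h'; move: (lt_le_trans ie (le_trans h h')); rewrite ltxx.
have : 1 / eps * den <= D ^+ 2 by rewrite -ler_pdivlMr.
move=> h2.
have h3 : den <= eps * D ^+ 2.
  have : eps * (1 / eps * den) <= eps * D ^+ 2 by rewrite ler_pM2l.
  by rewrite mulrA mul1r divff ?gt_eqF // mul1r.
split.
  apply/negP => /eqP D0; move: h; rewrite D0 expr0n /= mul0r.
  by rewrite leNgt ie.
by split; apply: le_trans h3.
Qed.

Lemma kbar_ge (eps Dd m0 V1 V0 t : R) : 0 < eps -> Dd != 0 ->
  V1 <= eps * Dd ^+ 2 -> V0 <= eps * Dd ^+ 2 -> 0 <= t <= 1 ->
  (t * (1 - t) + eps)^-1 <=
  \sum_(i < 6) ((fun k : nat => match k with 0 => 1 | 1 => m0 + Dd | 2 => V1 + (m0 + Dd) ^+ 2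
                  | 3 => 1 | 4 => m0 | 5 => V0 + m0 ^+ 2 | _ => 0 end) i) *
     ecoef (fun t => (t * (1 - t) + eps)^-1 / Dd) (fun t => m0 + t * Dd) i t.
Proof.
move=> e0 D0 h1 h0 /andP[t0 t1].
rewrite !big_ord_recr big_ord0 /= /ecoef /=.
set W := t * (1 - t) + eps.
have Wp : 0 < W by rewrite /W ltr_wpDl // mulr_ge0 // subr_ge0.
have k1 : 0 <= t * (eps * Dd ^+ 2 - V1) by rewrite mulr_ge0 // subr_ge0.
have k2 : 0 <= (1 - t) * (eps * Dd ^+ 2 - V0) by rewrite mulr_ge0 // subr_ge0.
apply: (@le_trans _ _ (W^-1 + (eps * Dd ^+ 2 - t * V1 - (1 - t) * V0) / (W ^+ 2 * Dd ^+ 2))).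
  rewrite lerDl; apply: divr_ge0; last by rewrite mulr_ge0 // sqr_ge0.
  lra.
apply: eqle; rewrite /W; field.
by rewrite D0 -/W gt_eqF.
Qed.

Lemma xln_div (m p : R) : 0 <= m -> 0 < p -> m * ln (m / p) = m * ln m - m * ln p.
Proof.
rewrite le_eqVlt => /predU1P[<-|m0] p0; first by rewrite !mul0r subrr.
by rewrite ln_div ?posrE // mulrBr.
Qed.


Lemma cont_sum (n : nat) (c : nat -> R) (e : nat -> R -> R) (t : R) :
  (forall i, (i < n)%N -> {for t, continuous (e i)}) ->
  {for t, continuous (fun s => \sum_(i < n) c i * e i s)}.
Proof.
elim: n => [|n IH] H.
  have -> : (fun s => \sum_(i < 0) c i * e i s) = (fun _ => 0).
    by apply/funext => s; rewrite big_ord0.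
  exact: cst_continuous.
have -> : (fun s => \sum_(i < n.+1) c i * e i s) =
          (fun s => (\sum_(i < n) c i * e i s) + c n * e n s).
  by apply/funext => s; rewrite big_ord_recr.
have h1 := IH (fun i hi => H i (ltnW hi)).
have h2 := H n (ltnSn n).
cont.
Qed.
End S.

Ltac cont := repeat (try apply: forP; lazymatch goal with
 | |- continuous_at _ (fun x => @?A x + @?B x) =>
     apply: (continuousD (f:=A) (g:=B))
 | |- continuous_at _ (fun x => @?A x - @?B x) =>
     apply: (continuousB (f:=A) (g:=B))
 | |- continuous_at _ (fun x => @?A x * @?B x) =>
     apply: (continuousM (s:=A) (t:=B))
 | |- continuous_at _ (fun x => - @?A x) =>
     apply: (continuousN (f:=A))
 | |- continuous_at _ (fun x => x) => exact: cvg_id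
 | |- continuous_at _ ?F => first [apply: forP'; exact: cst_continuous | apply: forP'; assumption]
 end).


Section M.
Variable R : realType.
Notation leb := (@lebesgue_measure R).
Lemma main_gen n (mu : {measure set (n.-tuple R) -> \bar R}) (q1 q0 pz L g : n.-tuple R -> R)
  (eps a : R) (e0 : 0 < eps) (ha : 0 < a < 1)
  (Hq1 : is_density mu q1) (Hq0 : is_density mu q0) (pzp : forall z, 0 < pz z)
  (Hfin : forall s : R, 0 <= s <= 1 ->
     [/\ mu.-integrable setT (fun z => (mixture s q1 q0 z * ln (pz z))%:E),
         mu.-integrable setT (fun z => (mixture s q1 q0 z * ln (L z))%:E),
         mu.-integrable setT (fun z => (mixture s q1 q0 z
                * ln (mixture s q1 q0 z / pz z))%:E) &
         {ae mu, forall z, 0 < mixture s q1 q0 z -> 0 < L z}])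
  (Hg1 : mu.-integrable setT (fun z => (q1 z * g z)%:E))
  (Hg0 : mu.-integrable setT (fun z => (q0 z * g z)%:E))
  (Hg1' : mu.-integrable setT (fun z => (q1 z * g z ^+ 2)%:E))
  (Hg0' : mu.-integrable setT (fun z => (q0 z * g z ^+ 2)%:E))
  (Hsnr : ((1 / eps)%:E <= SNR mu q1 q0 g)%E) :
  ELBO mu L pz q1 q0 a - ELBO mu L pz q1 q0 0
    >= LB a eps (ELBO mu L pz q1 q0 1 - ELBO mu L pz q1 q0 0).
Proof.
have /andP[a0 a1] := ha.
have [iq1 Iq1] := dens_int Hq1.
have [iq0 Iq0] := dens_int Hq0.
have [_ q1p _] := Hq1.
have [_ q0p _] := Hq0.
have [Dn0 [hV1 hV0]] := snr_facts e0 Hsnr.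
pose M1 := Defs.expect mu q1 g.
pose M0 := Defs.expect mu q0 g.
pose Dd := M1 - M0.
pose lamf := fun t : R => (t * (1 - t) + eps)^-1 / Dd.
pose cf := fun t : R => M0 + t * Dd.
have hcH : contH lamf cf.
  move=> t /andP[t0 t1]; split.
    rewrite /lamf; cont.
    apply: continuousV; first by rewrite gt_eqF // ltr_wpDl // mulr_ge0 // subr_ge0.
    cont.
  rewrite /cf; cont.
pose CC := fun i : nat => Gint a (ecoef lamf cf i).
have ecc : forall i t, 0 <= t <= 1 -> {for t, continuous (ecoef lamf cf i)}.
  by move=> i t /hcH [h1 h2]; exact: ecoef_cont.
have imon : forall i, (i < 6)%N ->
    mu.-integrable setT (EFin \o (fun z => mon i (q1 z) (q0 z) (g z))).
  case=> [|[|[|[|[|[|i]]]]]] // _.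
pose K := fun z => \sum_(i < 6) CC i * mon i (q1 z) (q0 z) (g z).
have [RK iK] := @Rint_lin R _ _ mu setT 6 CC (fun i z => mon i (q1 z) (q0 z) (g z)) measurableT imon.
have Kle : forall z, K z <= (1 - a) * (q0 z * ln (q0 z)) + a * (q1 z * ln (q1 z))
    - mm (q1 z) (q0 z) a * ln (mm (q1 z) (q0 z) a).
  move=> z; have G1 := gap1D (g z) ha (q1p z) (q0p z) hcH.
  have -> : K z = Gint a (kk lamf cf (q1 z) (q0 z) (g z)).
    rewrite (_ : kk lamf cf (q1 z) (q0 z) (g z) =
      fun t => \sum_(i < 6) mon i (q1 z) (q0 z) (g z) * ecoef lamf cf i t); last first.
      by apply/funext => t; exact: kk_expand.
    rewrite (@Gint_lin R a 6 (fun i => mon i (q1 z) (q0 z) (g z)) (ecoef lamf cf)); last 2 first.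
    - by rewrite !ltW.
    - by move=> i t _; exact: ecc.
    by rewrite /K; apply: eq_bigr => i _; rewrite mulrC.
  exact: G1.
have sa : 0 <= a <= 1 by rewrite !ltW.
have s0 : 0 <= (0:R) <= 1 by rewrite lexx ler01.
have s1 : 0 <= (1:R) <= 1 by rewrite lexx ler01.
have [_ ia ja _] := Hfin a sa.
have [_ i0 j0 _] := Hfin 0 s0.
have [_ i1 j1 _] := Hfin 1 s1.
pose F := fun (i : nat) (z : n.-tuple R) => match i with
  | 0 => mixture a q1 q0 z * ln (L z)
  | 1 => mixture 0 q1 q0 z * ln (L z)
  | 2 => mixture 1 q1 q0 z * ln (L z)
  | 3 => mixture a q1 q0 z * ln (mixture a q1 q0 z / pz z)
  | 4 => mixture 0 q1 q0 z * ln (mixture 0 q1 q0 z / pz z)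
  | 5 => mixture 1 q1 q0 z * ln (mixture 1 q1 q0 z / pz z)
  | _ => K z end.
pose cc := fun i : nat => match i with
  | 0 => 1 | 1 => - (1 - a) | 2 => - a | 3 => -1 | 4 => 1 - a | 5 => a | _ => -1 end.
have iF : forall i, (i < 7)%N -> mu.-integrable setT (EFin \o F i).
  by case=> [|[|[|[|[|[|[|i]]]]]]].
have [RF _] := @Rint_lin R _ _ mu setT 7 cc F measurableT iF.
have H0 : 0 <= Rintegral mu setT (fun z => \sum_(i < 7) cc i * F i z).
  apply: Rintegral_ge0 => z _.
  rewrite !big_ord_recr big_ord0 /= /cc /F /=.
  have mix0 : mixture 0 q1 q0 z = q0 z by rewrite /mixture; ring.
  have mix1 : mixture 1 q1 q0 z = q1 z by rewrite /mixture; ring.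
  rewrite !(xln_div _ (pzp z)) ?mix0 ?mix1 //. all: try exact: (mm_ge0 (q1p z) (q0p z) sa).
  have Kz := Kle z; rewrite -subr_ge0 in Kz.
  apply: (le_trans Kz); apply: eqle; rewrite /mm /mixture; ring.
have RK' : Rintegral mu setT (F 6) = \sum_(i < 6) CC i * Rintegral mu setT (fun z => mon i (q1 z) (q0 z) (g z)) := RK.
rewrite RF !big_ord_recr big_ord0 /= RK' in H0.
pose ER := fun i : nat => Rintegral mu setT (fun z => mon i (q1 z) (q0 z) (g z)).
have ER0 : ER 0%N = 1 := Iq1.
have ER3 : ER 3%N = 1 := Iq0.
have ER1 : ER 1%N = M0 + Dd by rewrite /Dd; rewrite (_ : ER 1%N = M1) //; ring.
have ER4 : ER 4%N = M0 := erefl.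
have var1 : Defs.variance mu q1 g = ER 2%N - M1 ^+ 2.
  have [L3 _] := @Rint_lin R _ _ mu setT 3 (fun k => match k with 0 => M1 ^+ 2 | 1 => - (2 * M1) | _ => 1 end)
    (fun i z => mon i (q1 z) (q0 z) (g z)) measurableT (fun i hi => imon i (leq_trans hi (isT : (3 <= 6)%N))).
  have -> : Defs.variance mu q1 g = Rintegral mu setT (fun z => q1 z * (g z - M1) ^+ 2) by [].
  transitivity (Rintegral mu setT (fun x => \sum_(i < 3) (match nat_of_ord i with 0 => M1 ^+ 2 | 1 => - (2 * M1) | _ => 1 end) * mon i (q1 x) (q0 x) (g x))).
    by apply: eq_Rintegral => z _; rewrite !big_ord_recr big_ord0 /=; ring.
  rewrite L3 !big_ord_recr big_ord0 /=.
  rewrite (_ : Rintegral mu setT (fun x => q1 x) = 1) // (_ : Rintegral mu setT (fun x => q1 x * g x) = M1) //.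
  rewrite (_ : Rintegral mu setT (fun x => q1 x * g x ^+ 2) = ER 2%N) //; ring.
have var0 : Defs.variance mu q0 g = ER 5%N - M0 ^+ 2.
  have [L3 _] := @Rint_lin R _ _ mu setT 3 (fun k => match k with 0 => M0 ^+ 2 | 1 => - (2 * M0) | _ => 1 end)
    (fun i z => mon i.+3 (q1 z) (q0 z) (g z)) measurableT (fun i hi => imon i.+3 hi).
  have -> : Defs.variance mu q0 g = Rintegral mu setT (fun z => q0 z * (g z - M0) ^+ 2) by [].
  transitivity (Rintegral mu setT (fun x => \sum_(i < 3) (match nat_of_ord i with 0 => M0 ^+ 2 | 1 => - (2 * M0) | _ => 1 end) * mon i.+3 (q1 x) (q0 x) (g x))).
    by apply: eq_Rintegral => z _; rewrite !big_ord_recr big_ord0 /=; ring.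
  rewrite L3 !big_ord_recr big_ord0 /=.
  rewrite (_ : Rintegral mu setT (fun x => q0 x) = 1) // (_ : Rintegral mu setT (fun x => q0 x * g x) = M0) //.
  rewrite (_ : Rintegral mu setT (fun x => q0 x * g x ^+ 2) = ER 5%N) //; ring.
have ER2 : ER 2%N = Defs.variance mu q1 g + (M0 + Dd) ^+ 2 by rewrite var1 /Dd; ring.
have ER5 : ER 5%N = Defs.variance mu q0 g + M0 ^+ 2 by rewrite var0; ring.
have GL := @Gint_lin R a 6 ER (ecoef lamf cf) sa (fun i t _ ht => ecc i t ht).
have GW : Gint a (fun t => (t * (1 - t) + eps)^-1) <= Gint a (fun t => \sum_(i < 6) ER i * ecoef lamf cf i t).
  apply: Gint_le => //.
  - move=> t ht; have KB := kbar_ge M0 e0 Dn0 hV1 hV0 ht.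
    apply: (le_trans KB); apply: eqle; apply: eq_bigr => -[[|[|[|[|[|[|i]]]]]] hi] _ //=.
    1-5: by rewrite ?ER0 ?ER1 ?ER2 ?ER3 ?ER4 ?ER5.
  - move=> t /andP[t0 t1]; cont.
    apply: continuousV; first by rewrite gt_eqF // ltr_wpDl // mulr_ge0 // subr_ge0.
    cont.
  - move=> t ht; apply: cont_sum => i _; exact: ecc.
have SS : \sum_(i < 6) CC i * Rintegral mu setT (fun z => mon i (q1 z) (q0 z) (g z))
    = \sum_(i < 6) ER i * Gint a (ecoef lamf cf i).
  by apply: eq_bigr => i _; rewrite mulrC.
rewrite SS -GL in H0.
have GWe : Gint a (fun t => (t * (1 - t) + eps)^-1) =
  (1 - a) * Rintegral leb `[0, a] (fun t => t / (t * (1 - t) + eps))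
  + a * Rintegral leb `[a, 1] (fun t => (1 - t) / (t * (1 - t) + eps)) by [].
rewrite GWe in GW.
have eE : forall s, ELBO mu L pz q1 q0 s = Rintegral mu setT (fun z => mixture s q1 q0 z * ln (L z))
  - Rintegral mu setT (fun z => mixture s q1 q0 z * ln (mixture s q1 q0 z / pz z)) by [].
rewrite /LB !eE.
rewrite /F /= in H0.
rewrite -subr_ge0 in GW. have := addr_ge0 H0 GW.
move=> HH; rewrite -subr_ge0; apply: (le_trans HH); apply: eqle; ring.
Qed.
End M.

Unset Implicit Arguments. Set Strict Implicit. Set Printing Implicit Defensive.

Theorem lemma3 (R : realType) (dX dZ dU k : nat) (hdim : (dZ < dX)%N)
  (muX : {measure set (dX.-tuple R) -> \bar R}) (HmuX : is_lebesgue_measure muX)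
  (muZ : {measure set (dZ.-tuple R) -> \bar R}) (HmuZ : is_lebesgue_measure muZ)
  (* fixed noise density *)
  (peps : dX.-tuple R -> R) (Hpeps : is_density muX peps)
  (* generative parameters theta = (f, T, lambda) (with A, B) *)
  (f : dZ.-tuple R -> dX.-tuple R)
  (T : 'I_dZ -> R -> 'rV[R]_k) (lam : 'I_dZ -> dU.-tuple R -> 'rV[R]_k)
  (A : dU.-tuple R -> R) (B : R -> R)
  (Hprior : forall u, is_density muZ (prior T lam A B u))
  (* inference parameters phi: encoder q(z|x) and posterior q(z|x,u) *)
  (enc : dX.-tuple R -> dZ.-tuple R -> R)
  (post : dX.-tuple R -> dU.-tuple R -> dZ.-tuple R -> R)
  (Henc : forall x, is_density muZ (enc x))
  (Hpost : forall x u, is_density muZ (post x u))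
  (* the sample *)
  (x : dX.-tuple R) (u : dU.-tuple R)
  (eps : R) (Heps : 0 < eps)
  (* finiteness of the expectations and divergences in the ELBOs *)
  (Hfin : forall a : R, 0 <= a <= 1 ->
     [/\ muZ.-integrable setT (fun z => (mixture a (enc x) (post x u) z
                                   * ln (prior T lam A B u z))%:E),
         muZ.-integrable setT (fun z => (mixture a (enc x) (post x u) z
                                   * ln (decoder peps f x z))%:E),
         muZ.-integrable setT (fun z => (mixture a (enc x) (post x u) z
                * ln (mixture a (enc x) (post x u) z / prior T lam A B u z))%:E) &
         {ae muZ, forall z, 0 < mixture a (enc x) (post x u) z ->
                            0 < decoder peps f x z}])
  (g : dZ.-tuple R -> R) (Hgm : measurable_fun setT g)
  (* finiteness of the expectations and variances of g *)
  (Hg1 : muZ.-integrable setT (fun z => (enc x z * g z)%:E))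
  (Hg0 : muZ.-integrable setT (fun z => (post x u z * g z)%:E))
  (Hg1' : muZ.-integrable setT (fun z => (enc x z * g z ^+ 2)%:E))
  (Hg0' : muZ.-integrable setT (fun z => (post x u z * g z ^+ 2)%:E))
  (Hsnr : ((1 / eps)%:E <= SNR muZ (enc x) (post x u) g)%E) :
  forall alpha : R, 0 <= alpha <= 1 ->
    ELBO muZ (decoder peps f x) (prior T lam A B u) (enc x) (post x u) alpha
    - ELBO muZ (decoder peps f x) (prior T lam A B u) (enc x) (post x u) 0
    >= LB alpha eps
         (ELBO muZ (decoder peps f x) (prior T lam A B u) (enc x) (post x u) 1
          - ELBO muZ (decoder peps f x) (prior T lam A B u) (enc x) (post x u) 0).
Proof.
move=> a ha; have /andP[a0 a1] := ha.
have pzp : forall z, 0 < prior T lam A B u z.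
  by move=> z; rewrite /prior; apply: prodr_gt0 => i _; exact: expR_gt0.
have [->|a0'] := eqVneq a 0.
  by rewrite /LB set_itv1 Rintegral_set1; apply: eqle; ring.
have [->|a1'] := eqVneq a 1.
  by rewrite /LB set_itv1 Rintegral_set1; apply: eqle; ring.
have ha' : 0 < a < 1 by rewrite !lt_neqAle eq_sym a0' a0 a1' a1.
exact: (@main_gen R dZ muZ (enc x) (post x u) (prior T lam A B u) (decoder peps f x) g eps a
  Heps ha' (Henc x) (Hpost x u) pzp Hfin Hg1 Hg0 Hg1' Hg0' Hsnr).
Qed.
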